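(* Let $X$ be an infinite compact metrizable space and $h\colon X\to X$ a minimal homeomorphism. If $F\subset X$ is a thin closed set, then $F$ is universally null.
   Context: $M_h(X)$ denotes the set of $h$-invariant Borel probability measures on $X$; a Borel set is universally null if it has measure $0$ for all $\mu\in M_h(X)$. For $F\subset X$ closed and $U\subset X$ open, write $F\prec U$ if there exist $M\in\mathbb{N}$, open sets $U_0,\dots,U_M\subset X$ and integers $d(0),\dots,d(M)$ such that $F\subset\bigcup_{j=0}^M U_j$, $h^{d(j)}(U_j)\subset U$ for all $j$, and the sets $h^{d(j)}(U_j)$ are pairwise disjoint. A closed set $F$ is thin if $F\prec U$ for every non-empty open $U\subset X$. *)

(* Defs.v *)
From HB Require Import structures.
From mathcomp Require Import all_boot all_order all_algebra.
From mathcomp Require Import all_classical all_reals all_analysis.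
Set Implicit Arguments. Unset Strict Implicit. Unset Printing Implicit Defensive.
Import Order.TTheory GRing.Theory Num.Theory.
Local Open Scope classical_set_scope.
Local Open Scope ring_scope.

(* metric spaces with a distinguished point (needed by the library's
   generated sigma-algebra construction; harmless, X is nonempty anyway) *)
#[short(type="pointedMetricType")]
HB.structure Definition PointedMetric (K : numDomainType) :=
  { M of Metric K M & Pointed M }.

Section Defs.
Context {R : realType} {X : pointedMetricType R}.

Definition borelX : measurableType _ := g_sigma_algebraType (@open X).

Definition zpow (h hinv : X -> X) (d : int) : X -> X :=
  match d with
  | Posz n => iter n h
  | Negz n => iter n.+1 hinv
  end.

Definition minimal_map (h : X -> X) : Prop :=
  forall F : set X, closed F -> h @` F = F -> F = set0 \/ F = setT.

Definition prec (h hinv : X -> X) (F U : set X) : Prop :=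
  exists (M : nat) (V : nat -> set X) (d : nat -> int),
    [/\ (forall j, (j <= M)%N -> open (V j)),
        F `<=` \bigcup_(j in [set j | (j <= M)%N]) V j,
        (forall j, (j <= M)%N -> zpow h hinv (d j) @` V j `<=` U) &
        (forall i j, (i <= M)%N -> (j <= M)%N -> i <> j ->
           zpow h hinv (d i) @` V i `&` zpow h hinv (d j) @` V j = set0)].

Definition thin (h hinv : X -> X) (F : set X) : Prop :=
  closed F /\ forall U : set X, open U -> U !=set0 -> prec h hinv F U.

Definition invariant_measure (h : X -> X) (mu : probability borelX R) : Prop :=
  forall A : set borelX, measurable A -> mu (h @^-1` A) = mu A.

Definition universally_null (h : X -> X) (F : set X) : Prop :=
  measurable (F : set borelX) /\
  forall mu : probability borelX R, invariant_measure h mu -> mu F = 0%E.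

End Defs.

(* Main.v *)
Require Import Defs.
From HB Require Import structures.
From mathcomp Require Import all_boot all_order all_algebra.
From mathcomp Require Import all_classical all_reals all_analysis.
Import Order.TTheory GRing.Theory Num.Theory.
Local Open Scope classical_set_scope.
Local Open Scope ring_scope.
Set Implicit Arguments. Unset Strict Implicit.

Section Geo.
Context {R : realType} {X : pointedMetricType R}.

Lemma sepx (s : seq X) (x : X) : x \notin s ->
  exists2 e : R, 0 < e & forall y, y \in s -> e <= mdist x y.
Proof.
elim: s => [|a s IH]; first by move=> _; exists 1 => //.
rewrite in_cons negb_or => /andP[xa /IH [e e0 He]].
exists (Num.min e (mdist x a)).
  by rewrite lt_min e0 mdist_gt0.
move=> y; rewrite in_cons => /orP[/eqP->|ys]; first by rewrite ge_min lexx orbT.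
by rewrite ge_min He.
Qed.

Lemma seps (s : seq X) : uniq s ->
  exists2 e : R, 0 < e & forall x y, x \in s -> y \in s -> x != y -> e <= mdist x y.
Proof.
elim: s => [|a s IH]; first by move=> _; exists 1 => //.
move=> /= /andP[as_ /IH [e1 e10 He1]].
have [e2 e20 He2] := @sepx s a as_.
exists (Num.min e1 e2); first by rewrite lt_min e10.
move=> x y; rewrite !in_cons => /orP[/eqP->|xs] /orP[/eqP->|ys].
- by rewrite eqxx.
- by move=> _; rewrite ge_min He2 ?orbT.
- by move=> _; rewrite metric_sym ge_min He2 ?orbT.
- by move=> xy; rewrite ge_min He1.
Qed.

Lemma points (Xinf : infinite_set [set: X]) (N : nat) :
  exists s : seq X, uniq s /\ size s = N.
Proof.
elim: N => [|N [s [us ss]]]; first by exists [::].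
have [x xs] : exists x, x \notin s.
  apply: contrapT => nx; apply: Xinf.
  apply: (sub_finite_set _ (finite_seq s)) => x _ /=.
  by apply: contrapT => /negP xs; apply: nx; exists x.
by exists (x :: s); rewrite /= xs us ss.
Qed.

Lemma disjoint_opens (Xinf : infinite_set [set: X]) (N : nat) :
  exists U : nat -> set X, [/\ forall i, open (U i), forall i, U i !=set0 &
    forall i j, (i < N)%N -> (j < N)%N -> i <> j -> U i `&` U j = set0].
Proof.
have [s [us ss]] := points Xinf N.
have [e e0 He] := @seps s us.
have e20 : 0 < e / 2 by rewrite divr_gt0.
pose U i := (ball (nth point s i) (PosNum e20)%:num)°.
exists U; split.
- by move=> i; have [] := open_nbhs_ball (nth point s i) (PosNum e20).
- by move=> i; exists (nth point s i); have [] := open_nbhs_ball (nth point s i) (PosNum e20).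
move=> i j iN jN ij; apply/seteqP; split => // z [/interior_subset/= + /interior_subset/=].
rewrite !ballEmdist /= => zi zj.
have : e <= mdist (nth point s i) (nth point s j).
  apply: He; rewrite ?mem_nth ?ss //.
  by rewrite nth_uniq ?ss //; apply/eqP.
rewrite leNgt => /negP; apply.
apply: (le_lt_trans (metric_triangle _ z _)).
by rewrite (metric_sym z) [ltRHS]splitr ltrD.
Qed.

End Geo.

Section Meas.
Context {R : realType} {X : pointedMetricType R} (h hinv : X -> X)
  (hK : cancel h hinv) (hinvK : cancel hinv h)
  (hcont : continuous h) (hinvcont : continuous hinv)
  (mu : probability (@borelX R X) R) (muinv : invariant_measure h mu).

Lemma open_meas (W : set X) : open W -> measurable (W : set (@borelX R X)).
Proof. by move=> oW; apply: sub_gen_smallest. Qed.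

Lemma img_h (W : set X) : h @` W = hinv @^-1` W.
Proof.
apply/seteqP; split => x /=; first by move=> [y Wy <-]; rewrite hK.
by move=> Wx; exists (hinv x).
Qed.

Lemma img_hinv (W : set X) : hinv @` W = h @^-1` W.
Proof.
apply/seteqP; split => x /=; first by move=> [y Wy <-]; rewrite hinvK.
by move=> Wx; exists (h x).
Qed.

Definition Pg (g : X -> X) := forall W : set X, open W ->
  open (g @` W) /\ mu (g @` W) = mu W.

Lemma Ph : Pg h.
Proof.
move=> W oW; rewrite img_h.
have oW' : open (hinv @^-1` W) by apply: (proj1 (continuousP _) hinvcont).
split => //.
rewrite -(muinv (open_meas oW')).
congr (mu _); apply/seteqP; split => x /=; by rewrite hK.
Qed.

Lemma Phinv : Pg hinv.
Proof.
move=> W oW; rewrite img_hinv.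
have oW' : open (h @^-1` W) by apply: (proj1 (continuousP _) hcont).
by split => //; rewrite muinv //; apply: open_meas.
Qed.

Lemma Piter g n : Pg g -> Pg (iter n g).
Proof.
move=> Pgg; elim: n => [|n IH] W oW.
  have -> : iter 0 g @` W = W by apply/seteqP; split => x /=; [case=> y ? <-|exists x].
  by [].
have -> : iter n.+1 g = g \o iter n g by apply/funext.
rewrite -image_comp.
have [op1 m1] := IH W oW.
have [op2 m2] := Pgg _ op1.
by split => //; rewrite m2.
Qed.

Lemma Pzpow d : Pg (zpow h hinv d).
Proof. by case: d => n; [apply: Piter; apply: Ph|apply: Piter; apply: Phinv]. Qed.

Lemma prec_le (F U : set X) : measurable (F : set (@borelX R X)) -> open U ->
  prec h hinv F U -> (mu F <= mu U)%E.
Proof.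
move=> mF oU [M [V [d [oV FV VU disj]]]].
pose W j := zpow h hinv (d j) @` V j.
have oW j : (j <= M)%N -> open (W j) by move=> jM; have [? ?] := Pzpow (d j) (oV j jM).
have mWV j : (j <= M)%N -> mu (W j) = mu (V j) by move=> jM; have [? ?] := Pzpow (d j) (oV j jM).
apply: (@le_trans _ _ (\sum_(k < M.+1) mu (V k))%E).
  apply: content_subadditive => //.
    by move=> k /= kM; apply: open_meas; apply: oV.
  by rewrite -bigcup_mkord.
rewrite (eq_bigr (fun k : 'I_M.+1 => mu (W k))); last first.
  by move=> k _; rewrite mWV // -ltnS.
rewrite -measure_semi_additive_ord_I.
- apply: le_measure; rewrite ?inE.
  + by apply: bigsetU_measurable => k _; apply: open_meas; apply: oW; rewrite -ltnS; exact: ltn_ord.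
  + exact: open_meas.
  + rewrite -bigcup_mkord => x [k /= kM Wx]; exact: (VU k kM).
- by move=> k kM; apply: open_meas; exact: (oW k kM).
- move=> i j /= iM jM; case: (eqVneq i j) => [->//|/eqP ij] [x Wx].
  by have := disj i j iM jM ij; rewrite /W => /seteqP[+ _] => /(_ x Wx).
- by apply: bigsetU_measurable => k _; apply: open_meas; apply: oW; rewrite -ltnS; exact: ltn_ord.
Qed.

End Meas.

Lemma real_small (R : realType) (r : R) : 0 <= r -> (forall N, r *+ N <= 1) -> r = 0.
Proof.
move=> r0 H; apply/eqP; rewrite eq_le r0 andbT leNgt; apply/negP => rpos.
have := H (Num.Def.trunc r^-1).+1; rewrite leNgt => /negP; apply.
have := truncnS_gt r^-1.
rewrite -mulr_natr -(ltr_pM2l rpos) mulfV ?gt_eqF //.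
by rewrite mul1r mulr_natr.
Qed.

Theorem lemma3p6 (R : realType) (X : pointedMetricType R) (h hinv : X -> X)
  (hK : cancel h hinv) (hinvK : cancel hinv h)
  (hcont : continuous h) (hinvcont : continuous hinv)
  (Xcpt : compact [set: X]) (Xinf : infinite_set [set: X])
  (hmin : minimal_map h) (F : set X) (Fthin : thin h hinv F) :
  universally_null h F.
Proof.
have mF : measurable (F : set (@borelX R X)).
  rewrite -(setCK F); apply: measurableC; apply: open_meas; rewrite openC; exact: Fthin.1.
split => // mu muinv.
have cU U : open U -> U !=set0 -> (mu F <= mu U)%E.
  move=> oU U0; apply: (prec_le hK hinvK hcont hinvcont muinv mF oU).
  exact: Fthin.2.
have H N : (mu F *+ N <= 1)%E.
  have [U [oU U0 dU]] := disjoint_opens Xinf N.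
  apply: (@le_trans _ _ (\sum_(i < N) mu (U i))%E).
    have -> : (mu F *+ N = \sum_(i < N) mu F)%E by rewrite sumr_const card_ord.
    apply: lee_sum => i _; exact: cU.
  rewrite -measure_semi_additive_ord_I.
  - apply: probability_le1; apply: bigsetU_measurable => k _; exact: open_meas.
  - by move=> k _; exact: open_meas.
  - move=> i j /= iN jN; case: (eqVneq i j) => [->//|/eqP ij] [x Ux].
    by have := dU i j iN jN ij => /seteqP[+ _] => /(_ x Ux).
  - by apply: bigsetU_measurable => k _; exact: open_meas.
have mu0 : (0 <= mu F)%E := measure_ge0 mu F.
case Emu: (mu F) H mu0 => [r||] H mu0.
- congr (_%:E); apply: real_small; first by rewrite -lee_fin.
  by move=> N; rewrite -lee_fin EFin_natmul.
- by have := H 1%N.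
- by [].
Qed.
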